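(* Let $(W,\mathrm d)$ and $(W_h,\mathrm d_h)$, $h>0$, be Hilbert complexes with morphisms $i_h\colon W_h\to W$ bounded uniformly in $h$. If $\Pi_h\colon W^k\to W_h^k$ is a family of bounded linear maps, bounded uniformly with respect to $h$, satisfying $\Pi_h\circ i_h^k=\mathrm{id}_{W_h^k}$, then there is a constant $C$ independent of $h$ such that for all $f\in W^k$, \[\|\Pi_hf-i_h^*f\|_h\le C\Big(\|I-J_h\|\,\|f\|+\inf_{\phi\in i_hW_h^k}\|f-\phi\|\Big).\]
   Context: A Hilbert complex $(W,\mathrm d)$ is a sequence of Hilbert spaces $W^k$ with closed densely defined linear maps $\mathrm d^k\colon V^k\subset W^k\to V^{k+1}\subset W^{k+1}$, $\mathrm d^k\circ\mathrm d^{k-1}=0$; a morphism is a sequence of bounded linear maps commuting with differentials. $\|\cdot\|$ is the $W^k$ norm, $\|\cdot\|_h$ the $W_h^k$ norm. $i_h^*\colon W^k\to W_h^k$ is the Hilbert adjoint of $i_h^k\colon W_h^k\to W^k$, $J_h=i_h^*i_h\colon W_h^k\to W_h^k$, and $\|I-J_h\|$ is its operator norm. *)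

(* Defs.v *)
From HB Require Import structures.
From mathcomp Require Import all_boot all_order all_algebra.
From mathcomp Require Import all_classical all_reals all_analysis.
Unset Printing Implicit Defensive.
Import Order.TTheory GRing.Theory Num.Theory.
Import numFieldNormedType.Exports.
Local Open Scope classical_set_scope.
Local Open Scope ring_scope.

Section Defs.
Variable R : realType.

(* A real inner product on a normed space, compatible with its norm.
   A Hilbert space is a complete normed space (completeNormedModType R)
   together with such an inner product. *)
Record inner_product (V : normedModType R) := InnerProduct {
  ip : V -> V -> R;
  ipC : forall x y, ip x y = ip y x;
  ipDl : forall (a : R) (x y z : V), ip (a *: x + y) z = a * ip x z + ip y z;
  ip_norm : forall x, ip x x = `|x| ^+ 2 }.

(* Hilbert complex: Hilbert spaces W^k, domains V^k (subspaces), and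
   differentials d^k : V^k -> V^(k+1), linear, closed, densely defined,
   with d^(k+1) o d^k = 0.  Values of d^k outside V^k are irrelevant. *)
Record hilbert_complex := HilbertComplex {
  HW : nat -> completeNormedModType R;
  Hip : forall k, inner_product (HW k);
  HV : forall k, set (HW k);
  Hd : forall k, HW k -> HW k.+1;
  HV0 : forall k : nat, HV k (0 : HW k);
  HV_lin : forall k (a : R) (x y : HW k), HV k x -> HV k y -> HV k (a *: x + y);
  Hd_lin : forall k (a : R) (x y : HW k), HV k x -> HV k y ->
     Hd k (a *: x + y) = a *: Hd k x + Hd k y;
  Hd_dom : forall k (x : HW k), HV k x -> HV k.+1 (Hd k x);
  Hd_closed : forall k (u : nat -> HW k) (x : HW k) (y : HW k.+1),
     (forall n, HV k (u n)) -> u @ \oo --> x -> (fun n => Hd k (u n)) @ \oo --> y ->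
     HV k x /\ Hd k x = y;
  HV_dense : forall k, closure (HV k) = setT;
  Hdd : forall k (x : HW k), HV k x -> Hd k.+1 (Hd k x) = 0 }.

Record hc_morphism (A B : hilbert_complex) := HCMorphism {
  hm : forall k, {linear HW A k -> HW B k};
  hm_bounded : forall k, exists M : R, forall x, `|hm k x| <= M * `|x|;
  hm_dom : forall k x, HV A k x -> HV B k (hm k x);
  hm_comm : forall k x, HV A k x -> Hd B k (hm k x) = hm k.+1 (Hd A k x) }.

Definition opnorm (V : normedModType R) (T : V -> V) : R :=
  sup [set `|T u| | u in [set u : V | `|u| <= 1]].

End Defs.

Arguments ip {R V} _ _ _.
Arguments HW {R} _ _.
Arguments Hip {R} _ _.
Arguments HV {R} _ _.
Arguments Hd {R} _ _ _.
Arguments hm {R A B} _ _.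
Arguments opnorm {R V} _.
Arguments hc_morphism {R} _ _.

(* Main.v *)
Require Import Defs.
From HB Require Import structures.
From mathcomp Require Import all_boot all_order all_algebra.
From mathcomp Require Import all_classical all_reals all_analysis.
From mathcomp Require Import lra.
Import Order.TTheory GRing.Theory Num.Theory.
Import numFieldNormedType.Exports.
Local Open Scope classical_set_scope.
Local Open Scope ring_scope.

Section IP.
Variables (R : realType) (V : normedModType R) (P : inner_product R V).

Lemma ip0l z : ip P 0 z = 0.
Proof. have := (@ipDl _ _ P) 1 0 0 z; rewrite scale1r addr0 mul1r => h; lra. Qed.
Lemma ipZl a x z : ip P (a *: x) z = a * ip P x z.
Proof. by have := (@ipDl _ _ P) a x 0 z; rewrite addr0 ip0l addr0. Qed.
Lemma ipDl1 x y z : ip P (x + y) z = ip P x z + ip P y z.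
Proof. by have := (@ipDl _ _ P) 1 x y z; rewrite scale1r mul1r. Qed.
Lemma ipNl x z : ip P (- x) z = - ip P x z.
Proof. by rewrite -scaleN1r ipZl mulN1r. Qed.
Lemma ipBl x y z : ip P (x - y) z = ip P x z - ip P y z.
Proof. by rewrite ipDl1 ipNl. Qed.
Lemma ipZr a x z : ip P z (a *: x) = a * ip P z x.
Proof. by rewrite ipC ipZl ipC. Qed.
Lemma ipDr x y z : ip P z (x + y) = ip P z x + ip P z y.
Proof. by rewrite ipC ipDl1 !((@ipC _ _ P) z). Qed.
Lemma ipBr x y z : ip P z (x - y) = ip P z x - ip P z y.
Proof. by rewrite ipC ipBl !((@ipC _ _ P) z). Qed.

Lemma ip_CS x y : ip P x y <= `|x| * `|y|.
Proof.
have e1 : ip P (x + y) (x + y) = ip P x x + 2 * ip P x y + ip P y y.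
  by rewrite ipDl1 !ipDr ((@ipC _ _ P) y x); lra.
have e2 : ip P (x - y) (x - y) = ip P x x - 2 * ip P x y + ip P y y.
  by rewrite ipBl !ipBr ((@ipC _ _ P) y x); lra.
rewrite !ip_norm in e1 e2.
have h1 := ler_normD x y.
have h2 := ler_dist_dist x y.
have h3 : `|x| - `|y| <= `|x - y| := le_trans (ler_norm (`|x| - `|y|)) h2.
have h4 : `|y| - `|x| <= `|x - y|.
  by rewrite distrC; exact: le_trans (ler_norm (`|y| - `|x|)) (ler_dist_dist y x).
have n1 := normr_ge0 x; have n2 := normr_ge0 y; have n3 := normr_ge0 (x + y).
have n4 := normr_ge0 (x - y).
nra.
Qed.

End IP.

Section Adj.
Variables (R : realType) (V1 V2 : normedModType R) (P1 : inner_product R V1)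
  (P2 : inner_product R V2) (T : {linear V1 -> V2}) (S : V2 -> V1).
Hypothesis adj : forall u f, ip P2 (T u) f = ip P1 u (S f).

Lemma ip_eq0 (w : V1) : ip P1 w w = 0 -> w = 0.
Proof. rewrite (@ip_norm _ _ P1) => /eqP; rewrite sqrf_eq0 normr_eq0 => /eqP //. Qed.

Lemma adj_lin a f g : S (a *: f + g) = a *: S f + S g.
Proof.
apply/eqP; rewrite -subr_eq0; apply/eqP; apply: ip_eq0.
set w := _ - _.
rewrite {2}/w ipBr ipDr ipZr -!adj ipDr ipZr; lra.
Qed.

Lemma adj_bound M : 0 <= M -> (forall u, `|T u| <= M * `|u|) ->
  forall f, `|S f| <= M * `|f|.
Proof.
move=> M0 hT f.
have h : `|S f| ^+ 2 <= M * `|S f| * `|f|.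
  rewrite -(@ip_norm _ _ P1) -adj; apply: le_trans (@ip_CS _ _ P2 _ _) _.
  by rewrite ler_wpM2r // hT.
have n1 := normr_ge0 (S f); have n2 := normr_ge0 f.
have [z|nz] := eqVneq `|S f| 0; first by rewrite z; nra.
have p : 0 < `|S f| by rewrite lt0r nz.
nra.
Qed.
End Adj.

Section Op.
Variables (R : realType) (V : normedModType R) (T : V -> V) (K : R).
Hypotheses (K0 : 0 <= K) (TK : forall v, `|T v| <= K * `|v|)
  (TZ : forall (a : R) v, T (a *: v) = a *: T v).

Lemma opnorm_has_sup : has_sup [set `|T u| | u in [set u : V | `|u| <= 1]].
Proof.
split; first by exists `|T 0|, 0 => //=; rewrite normr0.
exists K => _ [u /= hu <-]; apply: le_trans (TK u) _.
by rewrite -[leRHS]mulr1 ler_wpM2l.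
Qed.

Lemma opnorm_ge0 : 0 <= opnorm T.
Proof.
apply: le_trans (sup_upper_bound opnorm_has_sup _); first exact: (normr_ge0 (T 0)).
by exists 0 => //=; rewrite normr0.
Qed.

Lemma opnorm_bound u : `|T u| <= opnorm T * `|u|.
Proof.
have [->|nz] := eqVneq u 0.
  by have := TK 0; rewrite normr0 mulr0 => h; apply: le_trans h _; rewrite mulr0.
have p : 0 < `|u| by rewrite normr_gt0.
have hv : `| `|u|^-1 *: u| = 1 by rewrite normrZ normrV ?unitfE ?normr_eq0 // normr_id mulVf // gt_eqF.
have hv' : `| `|u|^-1 *: u| <= 1 by rewrite hv.
have := sup_upper_bound opnorm_has_sup (ex_intro2 _ _ (`|u|^-1 *: u) hv' erefl).
rewrite TZ normrZ normrV ?unitfE ?normr_eq0 // normr_id -/(opnorm T).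
by rewrite ler_pdivrMl // mulrC.
Qed.
End Op.

Lemma opnorm_le (R : realType) (V : normedModType R) (T : V -> V) (K : R) :
  0 <= K -> (forall v, `|T v| <= K * `|v|) -> opnorm T <= K.
Proof.
move=> K0 TK; apply: ge_sup; first by exists `|T 0|, 0 => //=; rewrite normr0.
move=> _ [u /= hu <-]; apply: le_trans (TK u) _.
by rewrite -[leRHS]mulr1 ler_wpM2l.
Qed.

Theorem mainTheorem11 (R : realType) (W : hilbert_complex R)
  (Wh : R -> hilbert_complex R) (i : forall h, hc_morphism (Wh h) W)
  (i_unif : forall k, exists M : R, forall h, 0 < h ->
     forall u, `|hm (i h) k u| <= M * `|u|)
  (k : nat)
  (istar : forall h, HW W k -> HW (Wh h) k)
  (istar_adj : forall h, 0 < h -> forall (u : HW (Wh h) k) (f : HW W k),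
     ip (Hip W k) (hm (i h) k u) f = ip (Hip (Wh h) k) u (istar h f))
  (Pi : forall h, {linear HW W k -> HW (Wh h) k})
  (Pi_unif : exists M : R, forall h, 0 < h -> forall f, `|Pi h f| <= M * `|f|)
  (Pi_inv : forall h, 0 < h -> forall u, Pi h (hm (i h) k u) = u) :
  exists C : R, forall h, 0 < h -> forall f : HW W k,
    `|Pi h f - istar h f| <=
      C * (opnorm (fun u : HW (Wh h) k => u - istar h (hm (i h) k u)) * `|f|
           + inf [set `|f - hm (i h) k u| | u in [set: HW (Wh h) k]]).
Proof.
have [MP0 HP0] := Pi_unif; have [Mi0 Hi0] := i_unif k.
pose MP := Num.max MP0 0; pose Mi := Num.max Mi0 0.
have MPp : 0 <= MP by rewrite le_max lexx orbT.
have Mip : 0 <= Mi by rewrite le_max lexx orbT.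
have HP h (hp : 0 < h) f : `|Pi h f| <= MP * `|f|.
  apply: le_trans (HP0 h hp f) _; apply: ler_wpM2r => //; by rewrite le_max lexx.
have Hi h (hp : 0 < h) u : `|hm (i h) k u| <= Mi * `|u|.
  apply: le_trans (Hi0 h hp u) _; apply: ler_wpM2r => //; by rewrite le_max lexx.
pose K := 1 + Mi ^+ 2.
have K0 : 0 <= K by rewrite /K; nra.
exists (MP + K * MP + Mi + 1) => h hp f.
set Ih := hm (i h) k; set S := istar h.
have adj := istar_adj h hp.
have SL := @adj_lin _ _ _ _ _ Ih S adj.
have SB := @adj_bound _ _ _ _ _ Ih S adj Mi Mip (Hi h hp).
have S0 : S 0 = 0.
  by have := SL (-1) 0 0; rewrite scaler0 addr0 scaleN1r addNr.
have SB' g g' : S (g - g') = S g - S g'.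
  have := SL (-1) g' 0; rewrite addr0 S0 addr0 !scaleN1r => SN.
  by have := SL 1 g (- g'); rewrite !scale1r SN.
set T := fun u : HW (Wh h) k => u - S (Ih u).
have TK v : `|T v| <= K * `|v|.
  rewrite /T; apply: le_trans (ler_normB _ _) _.
  have h1 := SB (Ih v); have h2 := Hi h hp v; have n := normr_ge0 v.
  have n2 := normr_ge0 (Ih v).
  rewrite /K; nra.
have TZ a v : T (a *: v) = a *: T v.
  rewrite /T linearZ /=; have := SL a (Ih v) 0; rewrite !addr0 S0 addr0 => ->.
  by rewrite scalerBr.
have opn0 := @opnorm_ge0 _ _ T K K0 TK.
have opnb := @opnorm_bound _ _ T K K0 TK TZ.
have opnK := @opnorm_le _ _ T K K0 TK.
rewrite -/T.
set L := `|Pi h f - S f|.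
set E := [set `|f - Ih u| | u in [set: HW (Wh h) k]].
have nf := normr_ge0 f.
have key u : L <= MP * opnorm T * `|f| + (MP + K * MP + Mi) * `|f - Ih u|.
  have e : Pi h f - S f = Pi h (f - Ih u) + T u - S (f - Ih u).
    rewrite linearB /= Pi_inv // SB' /T; set a := Pi h f; set b := S f;
      set c := S (Ih u); rewrite opprB.
    by rewrite !addrA !subrK.
  rewrite /L e.
  set d := `|f - Ih u|.
  have d0 : 0 <= d := normr_ge0 _.
  have n1 : `|Pi h (f - Ih u) + T u - S (f - Ih u)| <=
     `|Pi h (f - Ih u)| + `|T u| + `|S (f - Ih u)|.
    apply: le_trans (ler_normB _ _) _; rewrite lerD2r; exact: ler_normD.
  have n2 := HP h hp (f - Ih u); have n3 := SB (f - Ih u); have n4 := opnb u.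
  have n5 : `|u| <= MP * (`|f| + d).
    rewrite -{1}(Pi_inv h hp u); apply: le_trans (HP h hp _) _.
    apply: ler_wpM2l => //.
    have -> : Ih u = f - (f - Ih u) by rewrite opprB addrC subrK.
    exact: ler_normB.
  have nu := normr_ge0 u.
  rewrite -/d in n2 n3.
  have m1 : opnorm T * `|u| <= opnorm T * (MP * (`|f| + d)) by apply: ler_wpM2l.
  have m2 : opnorm T * (MP * d) <= K * (MP * d) by apply: ler_wpM2r => //; apply: mulr_ge0.
  nra.
have Cp : 0 < MP + K * MP + Mi + 1 by nra.
have ne : E !=set0 by exists `|f - Ih 0|, 0.
have i0 : 0 <= inf E.
  apply: lb_le_inf => // _ [u _ <-]; exact: normr_ge0.
have lb : (L - MP * opnorm T * `|f|) / (MP + K * MP + Mi + 1) <= inf E.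
  apply: lb_le_inf => // _ [u _ <-].
  rewrite ler_pdivrMr //; have := key u; have := normr_ge0 (f - Ih u); nra.
move: lb; rewrite ler_pdivrMr // => lb.
have of0 : 0 <= opnorm T * `|f| by apply: mulr_ge0.
have : MP * opnorm T * `|f| <= (MP + K * MP + Mi + 1) * (opnorm T * `|f|).
  rewrite -mulrA; apply: ler_wpM2r => //; nra.
nra.
Qed.
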